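(* Let $m\in\mathbb{N}$ and $s_1,\dots,s_m\ge1$. Then for every non-negative measurable function $f:H\times X\to[0,\infty)$ and every $\Delta\in X$, $$\int_{-1/3}^{1/3}f(a_{s_1+\cdots+s_m}u_r;\Delta)\,dr\le2\int f(a_{s_m}u_{r_m}\cdots a_{s_1}u_{r_1};\Delta)\,dm_I^{\otimes m}(r_1,\dots,r_m)$$ and $$\int f(a_{s_m}u_{r_m}\cdots a_{s_1}u_{r_1};\Delta)\,dm_I^{\otimes m}(r_1,\dots,r_m)\le\int_{-2}^{2}f(a_{s_1+\cdots+s_m}u_r;\Delta)\,dr.$$
   Context: $Q_0(v)=v_2^2-2v_1v_3$, $H=\{g\in\mathrm{SL}_3(\mathbb{R}):Q_0(gv)=Q_0(v)\ \forall v\}$, $X$ the space of unimodular lattices in $\mathbb{R}^3$. $a_t=\mathrm{diag}(e^t,1,e^{-t})$, $u_r=\begin{pmatrix}1&r&r^2/2\\0&1&r\\0&0&1\end{pmatrix}$. $m_I$ is the uniform Lebesgue probability measure on $I=[-1,1]$. *)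

(* Defs.v *)
From HB Require Import structures.
From mathcomp Require Import all_boot all_order all_algebra.
From mathcomp Require Import all_classical all_reals all_analysis.
Set Implicit Arguments. Unset Strict Implicit. Unset Printing Implicit Defensive.
Import Order.TTheory GRing.Theory Num.Theory.
Import numFieldNormedType.Exports.
Local Open Scope classical_set_scope.
Local Open Scope ring_scope.

Section Setup.
Variable R : realType.

(* Q_0(v) = v_2^2 - 2 v_1 v_3  (coordinates indexed 0,1,2 here) *)
Definition Q0 (v : 'cV[R]_3) : R := v 1 0 ^+ 2 - 2 * v 0 0 * v 2%:R 0.

Definition Hset : set 'M[R]_3 :=
  [set g | \det g = 1 /\ forall v : 'cV[R]_3, Q0 (g *m v) = Q0 v].

Definition a_ (t : R) : 'M[R]_3 :=
  \matrix_(i < 3, j < 3)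
    (if (i : nat) == j then
       (if (i : nat) == 0%N then expR t else if (i : nat) == 1%N then 1 else expR (- t))
     else 0).

Definition u_ (r : R) : 'M[R]_3 :=
  \matrix_(i < 3, j < 3)
    (if (j < i)%N then 0
     else if (i : nat) == j then 1
     else if ((j : nat) == (i : nat).+1)%N then r
     else r ^+ 2 / 2).

(* a_{s_m} u_{r_m} ... a_{s_1} u_{r_1}, with s_{i+1} = s i, r_{i+1} = tnth t i *)
Definition word (m : nat) (s : 'I_m -> R) (t : m.-tuple R) : 'M[R]_3 :=
  \prod_(i < m) (a_ (s (rev_ord i)) * u_ (tnth t (rev_ord i))).

(* Borel sigma-algebra on 3x3 real matrices (matrix topology = topology of R^9) *)
Definition Mat := g_sigma_algebraType (@open 'M[R]_3).

Definition latset (g : 'M[R]_3) : set 'cV[R]_3 :=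
  [set g *m map_mx (fun z : int => z%:~R) v | v in [set: 'cV[int]_3]].

Definition is_unimodular_lattice (L : set 'cV[R]_3) : Prop :=
  exists g : 'M[R]_3, \det g = 1 /\ L = latset g.

Definition Xlat := {L : set 'cV[R]_3 | is_unimodular_lattice L}.

Lemma Z3_unimodular : is_unimodular_lattice (latset 1%:M).
Proof. by exists 1%:M; rewrite det1. Qed.

HB.instance Definition _ := gen_eqMixin Xlat.
HB.instance Definition _ := gen_choiceMixin Xlat.
HB.instance Definition _ := isPointed.Build Xlat (exist _ _ Z3_unimodular).

(* Borel sigma-algebra of X = SL_3(R)/SL_3(Z): the quotient sigma-algebra,
   i.e. A is measurable iff its preimage in SL_3(R) is Borel. *)
Definition Xsigma : set (set Xlat) :=
  [set A | (measurable : set (set Mat))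
             [set g : Mat | \det g = 1 /\ exists2 L : Xlat, A L & sval L = latset g]].

Definition X := g_sigma_algebraType Xsigma.

Lemma lt_m1_1 : (-1 : R) < 1.
Proof. by rewrite (@lt_trans _ _ 0) ?ltrN10 ?ltr01. Qed.

Definition mI : set R -> \bar R := uniform_prob lt_m1_1.

Fixpoint mI_pow (n : nat) : set (n.-tuple R) -> \bar R :=
  match n as n0 return set (n0.-tuple R) -> \bar R with
  | 0%N => @dirac _ _ [tuple] R
  | n'.+1 => pushforward (product_measure1 mI (@mI_pow n'))
               (fun p : R * n'.-tuple R => [tuple of p.1 :: p.2])
  end.

Definition HX : set (Mat * X)%type := Hset `*` [set: X].

End Setup.
Arguments mI_pow R n : clear implicits.

(* Main.v *)
Require Import Defs.
From HB Require Import structures.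
From mathcomp Require Import all_boot all_order all_algebra.
From mathcomp Require Import all_classical all_reals all_analysis.
Import Order.TTheory GRing.Theory Num.Theory.
Import numFieldNormedType.Exports.
Local Open Scope classical_set_scope.
Local Open Scope ring_scope.
Set Implicit Arguments. Unset Strict Implicit. Unset Printing Implicit Defensive.
From mathcomp Require Import ring lra zify.
From mathcomp Require Import measurable_realfun.

Section Pn.
Context (R : realType).
Local Open Scope ereal_scope.

Definition consf n (p : R * n.-tuple R) : n.+1.-tuple R := [tuple of p.1 :: p.2].

Lemma measurable_consf n : measurable_fun setT (@consf n).
Proof. exact: (measurable_cons measurable_fst measurable_snd). Qed.

HB.instance Definition _ := isMeasure.Build default_measure_display R R (@mI R)
  (@measure0 _ _ _ (uniform_prob (@lt_m1_1 R)))
  (@measure_ge0 _ _ _ (uniform_prob (@lt_m1_1 R)))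
  (@measure_semi_sigma_additive _ _ _ (uniform_prob (@lt_m1_1 R))).
HB.instance Definition _ := Measure_isProbability.Build default_measure_display R R (@mI R)
  (@probability_setT _ _ _ (uniform_prob (@lt_m1_1 R))).
Variable n : nat.
Variable P : probability (n.-tuple R) R.
Definition consm := pushforward (@mI R \x P) (@consf n).
Let consm0 : consm set0 = 0.
Proof. by rewrite /consm /pushforward preimage_set0 measure0. Qed.
Let consm_ge0 A : 0 <= consm A.
Proof. by rewrite /consm /pushforward; apply: measure_ge0. Qed.
Let consm_sa : semi_sigma_additive consm.
Proof.
move=> F mF tF mUF; rewrite /consm /pushforward preimage_bigcup.
apply: measure_semi_sigma_additive.
- by move=> k; rewrite -[X in measurable X]setTI; exact: measurable_consf.
- apply/trivIsetP => /= i j _ _ ij; rewrite -preimage_setI.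
  by move/trivIsetP : tF => /(_ _ _ _ _ ij) ->//; rewrite preimage_set0.
- by rewrite -preimage_bigcup -[X in measurable X]setTI; exact: measurable_consf.
Qed.
HB.instance Definition _ := isMeasure.Build _ _ _ consm consm0 consm_ge0 consm_sa.
Let consm_setT : consm setT = 1.
Proof.
rewrite /consm /pushforward preimage_setT -setXTT product_measure1E //.
rewrite -[RHS](mule1 1); congr (_ * _); exact: probability_setT.
Qed.
HB.instance Definition _ := Measure_isProbability.Build _ _ _ consm consm_setT.
Definition consp : probability (n.+1.-tuple R) R := consm.
End Pn.

Fixpoint Pn (R : realType) (n : nat) : probability (n.-tuple R) R :=
  match n with
  | 0%N => [the probability _ _ of @dirac _ _ [tuple] R]
  | n'.+1 => consp (Pn R n')
  end.

Lemma mI_powE (R : realType) n : mI_pow R n = Pn R n.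
Proof.
elim: n => [//|n IH] /=.
by rewrite IH.
Qed.
Section Mx.
Context (R : realType).

Lemma a_mul (x y : R) : a_ x * a_ y = a_ (x + y).
Proof.
apply/matrixP => i j; rewrite !mxE !big_ord_recl !big_ord0 !mxE /=.
case: i => [[|[|[|i]]] Hi] //=; case: j => [[|[|[|j]]] Hj] //=;
  rewrite /bump /=; rewrite ?mxE /=; rewrite ?expRD ?opprD ?expRD; ring.
Qed.

Lemma u_mul (x y : R) : u_ x * u_ y = u_ (x + y).
Proof.
apply/matrixP => i j; rewrite !mxE !big_ord_recl !big_ord0 !mxE /=.
case: i => [[|[|[|i]]] Hi] //=; case: j => [[|[|[|j]]] Hj] //=;
  rewrite /bump /=; rewrite ?mxE /=; first [ring | field].
all: done. Qed.

Lemma u_a (r x : R) : u_ r * a_ x = a_ x * u_ (expR (- x) * r).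
Proof.
have e1 : expR x = (expR (- x))^-1 by rewrite expRN invrK.
have e0 : expR (- x) != 0 by rewrite gt_eqF // expR_gt0.
apply/matrixP => i j; rewrite !mxE !big_ord_recl !big_ord0 !mxE /=.
case: i => [[|[|[|i]]] Hi] //=; case: j => [[|[|[|j]]] Hj] //=;
  rewrite /bump /=; rewrite ?mxE /= ?e1; first [ring | field].
all: done.
Qed.

Lemma a0 : a_ (0 : R) = 1.
Proof.
apply/matrixP => i j; rewrite !mxE.
case: i => [[|[|[|i]]] Hi] //=; case: j => [[|[|[|j]]] Hj] //=; by rewrite ?oppr0 expR0.
Qed.

Lemma u0 : u_ (0 : R) = 1.
Proof.
apply/matrixP => i j; rewrite !mxE.
case: i => [[|[|[|i]]] Hi] //=; case: j => [[|[|[|j]]] Hj] //=; by rewrite expr0n /= mul0r.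
Qed.
End Mx.

Fixpoint psi (R : realType) (n : nat) : ('I_n -> R) -> n.-tuple R -> R :=
  match n with
  | 0%N => fun _ _ => 0
  | n'.+1 => fun s t => thead t + expR (- s ord0) * psi (fun i => s (lift ord0 i)) [tuple of behead t]
  end.

Lemma wordE (R : realType) n (s : 'I_n -> R) (t : n.-tuple R) :
  word s t = a_ (\sum_(i < n) s i) * u_ (psi s t).
Proof.
elim: n s t => [|n IH] s t.
  by rewrite /word big_ord0 big_ord0 /= a0 u0 mulr1.
rewrite /word big_ord_recr /=.
have -> : \prod_(i < n) (a_ (s (rev_ord (widen_ord (leqnSn n) i))) *
      u_ (tnth t (rev_ord (widen_ord (leqnSn n) i)))) =
   a_ (\sum_(i < n) s (lift ord0 i)) * u_ (psi (fun i : 'I_n => s (lift ord0 i)) [tuple of behead t]).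
  rewrite -IH /word; apply: eq_bigr => i _.
  have -> : rev_ord (widen_ord (leqnSn n) i) = lift ord0 (rev_ord i).
    by apply: val_inj; rewrite /= /bump /= add1n subnSK.
  rewrite tnth_behead; congr (_ * u_ (tnth t _)); apply: val_inj; rewrite /= inordK //.
  by have := ltn_ord i; lia.
have -> : rev_ord (@ord_max n) = ord0 by apply: val_inj; rewrite /= subnn.
rewrite big_ord_recl /= -!mulrA (mulrA (u_ _)) u_a -!mulrA u_mul mulrA a_mul.
by rewrite (addrC (\sum_(i < n) _)) (addrC (_ * _)).

Qed.

Lemma expR1_ge (R : realType) : 5/2 <= expR (1:R).
Proof.
have h : 1 + 1/6 <= expR (1/6 : R) := expR_ge1Dx _.
have -> : (1:R) = 6%:R * (1/6) by rewrite mul1r divff // pnatr_eq0.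
rewrite expRM_natl.
apply: (@le_trans _ _ ((1 + 1/6)^+6)).
  rewrite !exprS expr0; lra.
apply: lerXn2r => //; rewrite ?nnegrE //; lra.
Qed.
Section Q_part.
Local Open Scope ereal_scope.

Lemma measurable_idRR (R : realType) : measurable_fun setT (fun x : measurableTypeR R => (x : R)).
Proof. by move=> _ A mA; rewrite setTI. Qed.

Lemma int_transfer (R : realType) (mu : {measure set (measurableTypeR R) -> \bar R})
  (D : set R) (f : R -> \bar R) :
  measurable D -> measurable_fun D f -> (forall x, D x -> 0 <= f x) ->
  @integral _ R R mu D f = @integral _ (measurableTypeR R) R mu D f.
Proof.
move=> mD mf f0.
have := ge0_integral_pushforward (@measurable_idRR R) mu mD mf.
move=> ->; last by move=> x /[!inE]; exact: f0.
by [].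
Qed.

Lemma psi_cons (R : realType) n (s : 'I_n.+1 -> R) (p : R * n.-tuple R) :
  psi s (consf p) = (p.1 + expR (- s ord0) * psi (fun i => s (lift ord0 i)) p.2)%R.
Proof.
case: p => x t /=; congr (_ + _ * psi _ _)%R; exact: val_inj.
Qed.

Lemma measurable_psi (R : realType) n (s : 'I_n -> R) : measurable_fun setT (psi s).
Proof.
elim: n s => [|n IH] s /=; first exact: measurable_cst.
apply: measurable_funD; first exact: measurable_tnth.
apply: measurable_funM; first exact: measurable_cst.
exact: (measurableT_comp (IH _) (@measurable_behead _ R n)).
Qed.

Lemma Pn_succ_int (R : realType) n (s : 'I_n.+1 -> R) (F : R -> \bar R) :
  measurable_fun setT F -> (forall y, 0 <= F y) ->
  \int[Pn R n.+1]_t F (psi s t) =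
  \int[(@mI R) \x (Pn R n)]_p F (p.1 + expR (- s ord0) * psi (fun i => s (lift ord0 i)) p.2)%R.
Proof.
move=> mF F0.
rewrite [LHS](_ : _ = \int[pushforward ((@mI R) \x (Pn R n)) (@consf R n)]_t F (psi s t)) //.
rewrite (@ge0_integral_pushforward _ _ _ _ R (@consf R n) (@measurable_consf R n) ((@mI R) \x (Pn R n)) setT (fun t => F (psi s t))) //.
- rewrite preimage_setT; apply: eq_integral => p _; exact: (congr1 F (psi_cons s p)).
- by apply: measurableT_comp => //; exact: measurable_psi.
Qed.

Lemma Qlem (R : realType) n (s : 'I_n -> R) (F : R -> \bar R) (A B : \bar R) :
  (forall i, (1 <= s i)%R) -> measurable_fun setT F -> (forall y, 0 <= F y) -> 0 <= A ->
  (forall y : R, (`|y| <= 5/3)%R -> A <= F y <= B) ->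
  A <= \int[Pn R n]_t F (psi s t) <= B.
Proof.
elim: n s F => [|n IH] s F s1 mF F0 A0 FAB.
  rewrite /= integral_dirac //=; try (by move=> ? ? ?; apply: measurable_cst).
  by rewrite diracE in_setT mul1e; apply: FAB; rewrite normr0.
set e := expR (- s ord0).
set s' := fun i : 'I_n => s (lift ord0 i).
have e0 : (0 <= e)%R := expR_ge0 _.
have e25 : (e <= 2/5)%R.
  rewrite /e; apply: (@le_trans _ _ (expR (-1))).
    by rewrite ler_expR lerN2 s1.
  have h1 : (expR (-1) * expR 1 = 1 :> R)%R by rewrite -expRD addNr expR0.
  have h2 := expR1_ge R.
  have h3 : (0 < expR (-1) :> R)%R := expR_gt0 _.
  nra.
pose f := fun p : R * n.-tuple R => F (p.1 + e * psi s' p.2)%R.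
have mf : measurable_fun setT f.
  apply: measurableT_comp => //; apply: measurable_funD => //.
  apply: measurable_funM; first exact: measurable_cst.
  exact: measurableT_comp (measurable_psi s') measurable_snd.
have f0 : forall p, 0 <= f p by move=> p; exact: F0.
have -> : \int[Pn R n.+1]_t F (psi s t) = \int[(@mI R) \x (Pn R n)]_p f p.
  rewrite [LHS](_ : _ = \int[pushforward ((@mI R) \x (Pn R n)) (@consf R n)]_t F (psi s t)) //.
  rewrite (@ge0_integral_pushforward _ _ _ _ R (@consf R n) (@measurable_consf R n) ((@mI R) \x (Pn R n)) setT (fun t => F (psi s t))) //.
  - rewrite preimage_setT; apply: eq_integral => p _; exact: (congr1 F (psi_cons s p)).
  - by apply: measurableT_comp => //; exact: measurable_psi.
rewrite (fubini_tonelli1 f mf f0).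
set h := fubini_F (Pn R n) f.
have mh : measurable_fun setT h := measurable_fun_fubini_tonelli_F f mf f0.
have h0 : forall x, 0 <= h x by move=> x; apply: integral_ge0 => y _; exact: f0.
have hAB : forall x, (-1 <= x <= 1)%R -> A <= h x <= B.
  move=> x /andP[x1 x2]; apply: (IH s' (fun y => F (x + e * y)%R)) => //.
  - by move=> i; exact: s1.
  - apply: measurableT_comp => //; apply: measurable_funD; first exact: measurable_cst.
    by apply: measurable_funM; [exact: measurable_cst | exact: measurable_id].
  - move=> y hy; apply: FAB.
    have ey : (`|e * y| <= 2/3)%R.
      rewrite normrM (ger0_norm e0).
      have := normr_ge0 y; nra.
    have := ler_normD x (e * y)%R; have : (`|x| <= 1)%R by rewrite ler_norml x1 x2.
    lra.
have hU := @integral_uniform R (-1) 1 (@lt_m1_1 R) h mh h0.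
set c := (1 - -1)%R : R.
rewrite (_ : \int[_]_x h x = (c^-1)%:E * \int[lebesgue_measure]_(x in `[(-1)%R, 1%R]%classic) h x); last first.
  rewrite -hU; exact: (int_transfer (uniform_prob (@lt_m1_1 R))).
have c0 : (c != 0)%R by apply: lt0r_neq0; rewrite /c; lra.
have Icst : forall K : \bar R, \int[lebesgue_measure]_(x in `[(-1)%R, 1%R]%classic) (cst K) x = K * c%:E.
  move=> K; rewrite integral_cst //; congr (_ * _).
  have := @lebesgue_measure_itv R `[(-1)%R, 1%R]; rewrite /= lte_fin ifT; last by lra.
  by move=> ->; rewrite /c EFinD.
have cK : forall K : \bar R, (c^-1)%:E * (K * c%:E) = K.
  by move=> K; rewrite muleCA -EFinM mulVf // mule1.
apply/andP; split.
  rewrite -{1}(cK A) -Icst; apply: lee_wpmul2l; first by rewrite lee_fin invr_ge0 /c; lra.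
  apply: ge0_le_integral => //; try exact: measurable_funTS; try exact: measurable_cst.
  by move=> x; rewrite /= in_itv /= => /hAB /andP[].
rewrite -[X in _ <= X](cK B) -Icst; apply: lee_wpmul2l; first by rewrite lee_fin invr_ge0 /c; lra.
apply: ge0_le_integral => //; try exact: measurable_funTS; try exact: measurable_cst.
by move=> x; rewrite /= in_itv /= => /hAB /andP[].
Qed.
End Q_part.
Section M3_part.
Local Open Scope ereal_scope.

Section Shift.
Context (R : realType).
Local Notation mu := (@lebesgue_measure R).

Lemma measurable_shift (z : R) : measurable_fun setT (fun x : measurableTypeR R => (x + z)%R : measurableTypeR R).
Proof.
apply: measurable_funD; [exact: measurable_id | exact: measurable_cst].
Qed.

Lemma lebesgue_shift (z : R) (A : set (measurableTypeR R)) : measurable A ->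
  pushforward mu (fun x : measurableTypeR R => (x + z)%R : measurableTypeR R) A = mu A.
Proof.
move=> mA; apply/esym.
apply: (@lebesgue_measure_unique R (pushforward mu (fun x : measurableTypeR R => (x + z)%R : measurableTypeR R))) => //.
  exact: measurable_shift.
move=> H0 _ [[a b]] _ <-.
rewrite /= /pushforward.
rewrite (_ : _ @^-1` _ = `](a - z)%R, (b - z)%R]%classic); last first.
  apply/seteqP; split => x /=; rewrite !in_itv /= => /andP[h1 h2]; apply/andP; split; lra.
rewrite !lebesgue_measure_itv /= !lte_fin.
have -> : ((a - z) < (b - z))%R = (a < b)%R by rewrite ltrD2r.
by case: ifP => // _; rewrite -!EFinD; congr (_%:E); ring.
Qed.

Section ShiftM.
Variable z : R.
Definition shiftf := (fun x : measurableTypeR R => (x + z)%R : measurableTypeR R).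
Definition shiftm := pushforward mu shiftf.
Let shm0 : shiftm set0 = 0.
Proof. by rewrite /shiftm /pushforward preimage_set0 measure0. Qed.
Let shm_ge0 A : 0 <= shiftm A.
Proof. by rewrite /shiftm /pushforward; apply: measure_ge0. Qed.
Let shm_sa : semi_sigma_additive shiftm.
Proof.
move=> F mF tF mUF; rewrite /shiftm /pushforward preimage_bigcup.
apply: measure_semi_sigma_additive.
- by move=> k; rewrite -[X in measurable X]setTI; exact: measurable_shift.
- apply/trivIsetP => /= i j _ _ ij; rewrite -preimage_setI.
  by move/trivIsetP : tF => /(_ _ _ _ _ ij) ->//; rewrite preimage_set0.
- by rewrite -preimage_bigcup -[X in measurable X]setTI; exact: measurable_shift.
Qed.
HB.instance Definition _ := isMeasure.Build _ _ _ shiftm shm0 shm_ge0 shm_sa.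
End ShiftM.

Lemma int_shift (g : R -> \bar R) (z a b : R) : measurable_fun setT g -> (forall x, 0 <= g x) ->
  \int[mu]_(x in `[a, b]) g (x + z)%R = \int[mu]_(x in `[(a + z)%R, (b + z)%R]) g x.
Proof.
move=> mg g0.
transitivity (\int[shiftm z]_(x in `[(a + z)%R, (b + z)%R]) g x); last first.
  by apply: eq_measure_integral => A mA _; exact: (lebesgue_shift z mA).
rewrite /shiftm (ge0_integral_pushforward (measurable_shift z)) //. all: try (by move=> x _; exact: g0). all: try exact: measurable_funTS.
congr integral.
apply/seteqP; split => x /=; rewrite !in_itv /= => /andP[h1 h2]; apply/andP; split; lra.
Qed.
End Shift.
End M3_part.
Section M_part.

Section Cont.
Context (R : realType).

Lemma cont_mul (T : topologicalType) (f g : T -> R) :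
  continuous f -> continuous g -> continuous (fun x => f x * g x).
Proof. by move=> cf cg x; exact: (continuousM (cf x) (cg x)). Qed.

Lemma cont_add (T : topologicalType) (f g : T -> R) :
  continuous f -> continuous g -> continuous (fun x => f x + g x).
Proof. by move=> cf cg x; exact: (continuousD (cf x) (cg x)). Qed.

Lemma cont_sub (T : topologicalType) (f g : T -> R) :
  continuous f -> continuous g -> continuous (fun x => f x - g x).
Proof. by move=> cf cg x; exact: (continuousB (cf x) (cg x)). Qed.

Lemma cont_sum (T : topologicalType) (I : Type) (r : seq I) (F : I -> T -> R) :
  (forall i, continuous (F i)) -> continuous (fun x => \sum_(i <- r) F i x).
Proof.
move=> cF; elim: r => [|i r IH].
  by under eq_fun do rewrite big_nil; exact: cst_continuous.
under eq_fun do rewrite big_cons.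
by move=> x; apply: continuousD; [exact: cF | exact: IH].
Qed.

Lemma cont_prod (T : topologicalType) (I : Type) (r : seq I) (F : I -> T -> R) :
  (forall i, continuous (F i)) -> continuous (fun x => \prod_(i <- r) F i x).
Proof.
move=> cF; elim: r => [|i r IH].
  by under eq_fun do rewrite big_nil; exact: cst_continuous.
under eq_fun do rewrite big_cons.
by move=> x; apply: continuousM; [exact: cF | exact: IH].
Qed.

Lemma det_continuous : continuous (fun g : 'M[R]_3 => \det g).
Proof.
rewrite /determinant; apply: cont_sum => s.
apply: cont_mul; first exact: cst_continuous.
by apply: cont_prod => i; exact: coord_continuous.
Qed.

Lemma mulmx_entry_continuous (v : 'cV[R]_3) i :
  continuous (fun g : 'M[R]_3 => (g *m v) i 0).
Proof.
under eq_fun do rewrite mxE.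
apply: cont_sum => j; apply: cont_mul; first exact: coord_continuous.
exact: cst_continuous.
Qed.

Lemma Q0_continuous (v : 'cV[R]_3) : continuous (fun g : 'M[R]_3 => Q0 (g *m v)).
Proof.
rewrite /Q0; apply: cont_sub.
  by under eq_fun do rewrite expr2; apply: cont_mul; exact: mulmx_entry_continuous.
apply: cont_mul; last exact: mulmx_entry_continuous.
by apply: cont_mul; [exact: cst_continuous | exact: mulmx_entry_continuous].
Qed.

Lemma Hset_closed : closed (@Hset R).
Proof.
have -> : @Hset R = (fun g : 'M[R]_3 => \det g) @^-1` [set 1] `&`
    \bigcap_(v in [set: 'cV[R]_3]) ((fun g : 'M[R]_3 => Q0 (g *m v)) @^-1` [set Q0 v]).
  apply/seteqP; split => g /=.
    by move=> [h1 h2]; split => // v _; exact: h2.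
  by move=> [h1 h2]; split => // v; exact: h2.
apply: closedI.
  by apply: preimage_closed; [move=> x _; exact: det_continuous | exact: closed_eq].
apply: closed_bigI => v _.
by apply: preimage_closed; [move=> x _; exact: Q0_continuous | exact: closed_eq].
Qed.

End Cont.

Section Memb.
Context (R : realType).

Lemma det_a (S : R) : \det (a_ S) = 1.
Proof.
rewrite det_trig.
  rewrite !big_ord_recl big_ord0 !mxE /= mulr1 mul1r -expRD subrr expR0 //.
apply/forallP => i; apply/forallP => j; apply/implyP.
by case: i => [[|[|[|i]]] Hi]; case: j => [[|[|[|j]]] Hj]; rewrite // !mxE.
Qed.

Lemma det_u (r : R) : \det (u_ r) = 1.
Proof.
rewrite -det_tr det_trig.
  by rewrite !big_ord_recl big_ord0 !mxE /= !mulr1.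
apply/forallP => i; apply/forallP => j; apply/implyP.
by case: i => [[|[|[|i]]] Hi]; case: j => [[|[|[|j]]] Hj]; rewrite // !mxE.
Qed.

Lemma au_in_H (S r : R) : @Hset R (a_ S * u_ r).
Proof.
split; first by rewrite det_mulmx det_a det_u mulr1.
move=> v; rewrite /Q0 !mxE !big_ord_recl !big_ord0 !mxE /=.
rewrite !big_ord_recl !big_ord0 !mxE /=.
have e1 : expR S = (expR (- S))^-1 by rewrite expRN invrK.
have e0 : expR (- S) != 0 by rewrite gt_eqF // expR_gt0.
rewrite /bump /= e1; have E1 : (1 : 'I_3) = lift ord0 ord0 by apply: val_inj.
have E2 : (2%:R : 'I_3) = lift ord0 (lift ord0 ord0) by apply: val_inj.
have E0 : (0 : 'I_3) = ord0 by apply: val_inj.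
by rewrite E2 E1 E0; field.
Qed.
End Memb.

Section PhiMeas.
Context (R : realType).

Definition N1 : 'M[R]_3 := \matrix_(i < 3, j < 3) ((j == i.+1 :> nat)%:R).
Definition N2 : 'M[R]_3 := \matrix_(i < 3, j < 3) (((i == 0 :> nat) && (j == 2 :> nat))%:R).

Lemma u_affine (r : R) : u_ r = 1 + r *: N1 + (r ^+ 2 / 2) *: N2.
Proof.
apply/matrixP => i j; rewrite !mxE.
by case: i => [[|[|[|i]]] Hi]; case: j => [[|[|[|j]]] Hj]; rewrite //= ?mulr0 ?mulr1 ?addr0 ?add0r.
Qed.

Lemma vcont_add (V : normedModType R) (f g : R -> V) :
  continuous f -> continuous g -> continuous (fun x => f x + g x).
Proof. by move=> cf cg x; exact: (continuousD (cf x) (cg x)). Qed.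

Lemma phi_cont (S : R) : continuous (fun r : R => a_ S * u_ r).
Proof.
have -> : (fun r : R => a_ S * u_ r) =
    (fun r => a_ S + r *: (a_ S * N1) + (r ^+ 2 / 2) *: (a_ S * N2)).
  by apply: funext => r; rewrite u_affine !mulrDr mulr1 -!scalerAr.
apply: vcont_add; first apply: vcont_add.
- exact: cst_continuous.
- by move=> x; apply: continuousZr_tmp; exact: cvg_id.
- move=> x; apply: (continuousZr_tmp (s := fun r : R => r ^+ 2 / 2)).
  apply: (cont_mul (f := fun r : R => r ^+ 2)); last exact: cst_continuous.
  under eq_fun do rewrite expr2.
  by apply: (cont_mul (f := id) (g := id)) => z; exact: cvg_id.
Qed.

Lemma measurable_phi (S : R) : measurable_fun setT (fun r : R => (a_ S * u_ r : Mat R)).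
Proof.
apply: (@measurability _ _ R (Mat R) setT _ (@open 'M[R]_3)); first by [].
move=> _ [B oB <-]; rewrite setTI; apply: open_measurable.
by apply: open_comp => // x _; exact: phi_cont.
Qed.

Lemma Hset_measurable : measurable (@Hset R : set (Mat R)).
Proof.
rewrite -(setCK (@Hset R)); apply: measurableC; apply: sub_sigma_algebra.
exact: closed_openC (@Hset_closed R).
Qed.

Lemma HX_measurable : measurable (@HX R).
Proof. exact: measurableX (Hset_measurable) measurableT. Qed.

Lemma measurable_g (f : (Mat R * X R)%type -> R) (D : X R) (S : R) :
  measurable_fun (@HX R) f -> measurable_fun setT (fun r : R => (f (a_ S * u_ r, D))%:E).
Proof.
move=> mf; apply/measurable_EFinP.
apply: (measurable_comp (F := @HX R)).
- exact: HX_measurable.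
- by move=> _ [r _ <-]; split => //; exact: au_in_H.
- exact: mf.
- exact: measurable_fun_pair (measurable_phi S) (measurable_cst D).
Qed.
End PhiMeas.
End M_part.
Section Main_part.
Local Open Scope ereal_scope.

Lemma main_aux (R : realType) n (s : 'I_n.+1 -> R) (g : R -> \bar R) :
  (forall i, (1 <= s i)%R) -> measurable_fun setT g -> (forall r, 0 <= g r) ->
  \int[lebesgue_measure]_(r in `[(-(1/3))%R, (1/3)%R]) g r <= 2%:E * \int[Pn R n.+1]_t g (psi s t) /\
  \int[Pn R n.+1]_t g (psi s t) <= \int[lebesgue_measure]_(r in `[(-2)%R, 2%R]) g r.
Proof.
move=> s1 mg g0.
set e := expR (- s ord0).
set s' := fun i : 'I_n => s (lift ord0 i).
have e0 : (0 <= e)%R := expR_ge0 _.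
have e25 : (e <= 2/5)%R.
  rewrite /e; apply: (@le_trans _ _ (expR (-1))).
    by rewrite ler_expR lerN2 s1.
  have h1 : (expR (-1) * expR 1 = 1 :> R)%R by rewrite -expRD addNr expR0.
  have h2 := expR1_ge R.
  have h3 : (0 < expR (-1) :> R)%R := expR_gt0 _.
  nra.
pose fp := fun p : R * n.-tuple R => g (p.1 + e * psi s' p.2)%R.
have mfp : measurable_fun setT fp.
  apply: measurableT_comp => //; apply: measurable_funD => //.
  apply: measurable_funM; first exact: measurable_cst.
  exact: measurableT_comp (measurable_psi s') measurable_snd.
have fp0 : forall p, 0 <= fp p by move=> p; exact: g0.
rewrite (Pn_succ_int s mg g0) (fubini_tonelli2 fp mfp fp0).
pose gs := fun p : R * R => g (p.1 + p.2)%R.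
have mgs : measurable_fun setT gs.
  by apply: measurableT_comp => //; apply: measurable_funD.
have gs0 : forall p, 0 <= gs p by move=> p; exact: g0.
pose G := fubini_G (@mI R) gs.
have mG : measurable_fun setT G := measurable_fun_fubini_tonelli_G gs mgs gs0.
have G0 : forall z, 0 <= G z by move=> z; apply: integral_ge0 => x _; exact: gs0.
set c := (1 - -1)%R : R.
have c2 : c = 2%R by rewrite /c; lra.
pose L := (c^-1)%:E * \int[lebesgue_measure]_(r in `[(-(1/3))%R, (1/3)%R]) g r.
pose U := (c^-1)%:E * \int[lebesgue_measure]_(r in `[(-2)%R, 2%R]) g r.
have GE : forall z, G z = (c^-1)%:E * \int[lebesgue_measure]_(x in `[(-1 + z)%R, (1 + z)%R]) g x.
  move=> z.
  have mgz : measurable_fun setT (fun x : R => g (x + z)%R).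
    by apply: measurableT_comp => //; apply: measurable_funD => //; exact: measurable_cst.
  have gz0 : forall x : R, 0 <= g (x + z)%R by move=> x; exact: g0.
  rewrite -int_shift //.
  rewrite -(@integral_uniform R (-1) 1 (@lt_m1_1 R) (fun x => g (x + z)%R) mgz gz0).
  exact: (int_transfer (uniform_prob (@lt_m1_1 R))).
have GB : forall z : R, (`|z| <= 2/3)%R -> L <= G z <= U.
  move=> z hz; rewrite GE; have := hz; rewrite ler_norml => /andP[z1 z2].
  have cge : (0 <= c^-1)%R by rewrite invr_ge0 c2.
  have gint : forall A B : set R, measurable A -> measurable B -> A `<=` B ->
      \int[lebesgue_measure]_(x in A) g x <= \int[lebesgue_measure]_(x in B) g x.
    move=> A B mA mB AB; apply: ge0_subset_integral => //; first exact: measurable_funTS.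
  apply/andP; split; apply: lee_wpmul2l; rewrite ?lee_fin //; apply: gint => //;
    by move=> x /=; rewrite !in_itv /= => /andP[h1 h2]; apply/andP; split; lra.
have L0 : 0 <= L.
  by apply: mule_ge0; [rewrite lee_fin invr_ge0 c2 | apply: integral_ge0 => x _; exact: g0].
have QQ := @Qlem R n s' (fun y => G (e * y)%R) L U (fun i => s1 _).
have /andP[H1 H2] : L <= \int[Pn R n]_t G (e * psi s' t)%R <= U.
  apply: QQ => //.
  - apply: (measurableT_comp mG); apply: measurable_funM; [exact: measurable_cst | exact: measurable_id].
  - move=> y hy; apply: GB; rewrite normrM (ger0_norm e0).
    have := normr_ge0 y; nra.
split.
  rewrite -[X in X <= _](_ : 2%:E * L = _); last first.
    by rewrite /L muleA -EFinM c2 divff // mul1e.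
  exact: lee_wpmul2l.
apply: (le_trans H2); rewrite /U.
rewrite -[X in _ <= X]mul1e; apply: lee_wpmul2r.
  by apply: integral_ge0 => x _; exact: g0.
by rewrite lee_fin c2 invf_le1 //; lra.
Qed.

End Main_part.
Unset Implicit Arguments.
Theorem lemma6p1 (R : realType) (m : nat) (s : 'I_m -> R) :
  (0 < m)%N ->
  (forall i, 1 <= s i) ->
  forall (f : (Mat R * X R)%type -> R),
    measurable_fun (@HX R) f ->
    (forall p, (@HX R) p -> 0 <= f p) ->
    forall Delta : X R,
      let S := \sum_(i < m) s i in
      ((\int[@lebesgue_measure R]_(r in [set r : R | (- (1/3) <= r <= 1/3)%R])
          (f ((a_ S * u_ r)%R, Delta))%:E)
       <= 2%:E * \int[mI_pow R m]_(t in [set: m.-tuple R])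
                   (f (word s t, Delta))%:E)%E /\
      ((\int[mI_pow R m]_(t in [set: m.-tuple R]) (f (word s t, Delta))%:E)
       <= \int[@lebesgue_measure R]_(r in [set r : R | (-2 <= r <= 2)%R])
            (f ((a_ S * u_ r)%R, Delta))%:E)%E.
Proof.
case: m s => [|n] s m0; first by rewrite ltnn in m0.
move=> s1 f mf f0 Delta S.
have set_cc : forall a b : R, [set r : R | (a <= r <= b)%R] = `[a, b]%classic.
  by move=> a b; apply/seteqP; split => r /=; rewrite in_itv.
have mg : measurable_fun setT (fun r : R => (f (a_ S * u_ r, Delta))%:E) := measurable_g Delta S mf.
have g0 : forall r, (0 <= (f (a_ S * u_ r, Delta))%:E)%E.
  by move=> r; rewrite lee_fin; apply: f0; split => //; exact: au_in_H.
have E : (\int[mI_pow R n.+1]_(t in [set: n.+1.-tuple R]) (f (word s t, Delta))%:E =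
   \int[Pn R n.+1]_t (fun r : R => (f (a_ S * u_ r, Delta))%:E) (psi s t))%E.
  by rewrite mI_powE; apply: eq_integral => t _; rewrite wordE.
rewrite E !set_cc.
exact: main_aux.
Qed.
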